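(* Let $X$ be a Hausdorff space. The following are equivalent: (a) $X$ is hereditarily disconnected; (b) there is a positive integer $n$ such that $\mathcal{F}_n(X)$ is hereditarily disconnected; (b') for every positive integer $n$, $\mathcal{F}_n(X)$ is hereditarily disconnected; (c) $\mathcal{F}(X)$ is hereditarily disconnected.
   Context: $\mathcal{F}(X)$ is the set of nonempty finite subsets of $X$ and $\mathcal{F}_n(X)$ the set of nonempty subsets with at most $n$ points, with the Vietoris topology (generated by $U^+=\{A: A\subset U\}$ and $U^-=\{A: A\cap U\neq\emptyset\}$ for $U$ open in $X$). A space is hereditarily disconnected if every nonempty connected subset is a singleton. *)

(* Defs.v *)
From HB Require Import structures.
From mathcomp Require Import all_boot all_order finmap.
From mathcomp Require Import all_classical all_reals all_analysis.
Set Implicit Arguments. Unset Strict Implicit. Unset Printing Implicit Defensive.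
Local Open Scope classical_set_scope.
Local Open Scope fset_scope.

Definition hereditarily_disconnected (T : topologicalType) : Prop :=
  forall A : set T, A !=set0 -> connected A -> exists x, A = [set x].

Section Vietoris.
Variables (X : topologicalType) (P : pred {fset X}).

Definition vietoris : Type := {A : {fset X} | P A}.
HB.instance Definition _ := Choice.on vietoris.

Definition vplus (U : set X) : set vietoris :=
  [set A | forall x, x \in val A -> U x].
Definition vminus (U : set X) : set vietoris :=
  [set A | exists2 x, x \in val A & U x].

Definition vietoris_subbase (i : set X * bool) : set vietoris :=
  if i.2 then vplus i.1 else vminus i.1.
Definition vietoris_index : set (set X * bool) := [set i | open i.1].

HB.instance Definition _ :=
  isSubBaseTopological.Build vietoris vietoris_index vietoris_subbase.
End Vietoris.

Definition Fin (X : topologicalType) : topologicalType :=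
  vietoris (fun A : {fset X} => A != fset0).
Definition Fin_n (X : topologicalType) (n : nat) : topologicalType :=
  vietoris (fun A : {fset X} => (A != fset0) && (#|` A| <= n)%N).

(* Main.v *)
Require Import Defs.
From HB Require Import structures.
From mathcomp Require Import all_boot all_order finmap.
From mathcomp Require Import all_classical all_reals all_analysis.

Local Open Scope classical_set_scope.

Section Generic.
Variable T : topologicalType.

Lemma loc_open (A S : set T) :
  open [set x | exists2 N, nbhs x N & A `&` N `<=` S].
Proof.
rewrite openE => x [N Nx sN].
move: Nx; rewrite nbhsE => -[B [oB Bx] BN].
apply: (@filterS _ _ _ B); last exact: open_nbhs_nbhs.
move=> y By; exists B; first exact: open_nbhs_nbhs.
by move=> z [Az Bz]; apply: sN; split => //; apply: BN.
Qed.

Lemma conn_clopen (A S : set T) : connected A -> S `<=` A -> S !=set0 ->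
  (forall x, S x -> exists2 N, nbhs x N & A `&` N `<=` S) ->
  (forall x, A x -> ~ S x -> exists2 N, nbhs x N & A `&` N `<=` ~` S) ->
  S = A.
Proof.
move=> cA SA S0 h1 h2; apply: cA => //.
- exists [set x | exists2 N, nbhs x N & A `&` N `<=` S]; first exact: loc_open.
  apply/seteqP; split=> x.
    by move=> Sx; split; [exact: SA | exact: h1].
  by move=> [Ax [N Nx sN]]; apply: sN; split => //; exact: nbhs_singleton.
- exists (~` [set x | exists2 N, nbhs x N & A `&` N `<=` ~` S]).
    exact/open_closedC/loc_open.
  apply/seteqP; split=> x.
    move=> Sx; split; first exact: SA.
    by move=> [N Nx sN]; apply: (sN x) => //; split; [exact: SA|exact: nbhs_singleton].
  move=> [Ax nC]; apply: contrapT => nS; apply: nC; exact: h2.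
Qed.

End Generic.

Section Vsub.
Variables (X : topologicalType) (P : pred {fset X}).

Lemma sub_open (i : set X * bool) : open i.1 ->
  @open (vietoris P) (@vietoris_subbase X P i).
Proof.
move=> oU.
exists [set (@vietoris_subbase X P i)]; last by rewrite bigcup_set1.
move=> _ ->; exists [fset i]%fset.
  by move=> j; rewrite !inE => /eqP ->.
by rewrite set_fset1 bigcap_set1.
Qed.

Lemma vplus_open (U : set X) : open U -> @open (vietoris P) (@vplus X P U).
Proof. by move=> oU; apply: (@sub_open (U, true)). Qed.

Lemma vminus_open (U : set X) : open U -> @open (vietoris P) (@vminus X P U).
Proof. by move=> oU; apply: (@sub_open (U, false)). Qed.

Lemma sing_cont (HP : forall x, P [fset x]%fset) :
  continuous (fun x : X => (exist _ [fset x]%fset (HP x) : vietoris P)).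
Proof.
move=> x N /=.
move=> [B [[D' sD' eB] Bx BN]].
move: Bx; rewrite -eB => -[F DF Fx].
case: (sD' _ DF) => D'' sD'' eF.
have {}Fx : F (exist _ [fset x]%fset (HP x)) by exact: Fx.
subst F.
apply: (@filterS _ _ _ (\bigcap_(j in [set` D'']) j.1)).
  move=> y Hy; apply: BN; rewrite -eB.
  exists (\bigcap_(i in [set` D'']) @vietoris_subbase X P i) => //.
  move=> j /= jD; have := Hy j jD.
  case: j {jD} => U [] /= Hj.
    by move=> z; rewrite inE => /eqP ->.
  by exists y; rewrite ?inE.
apply: filter_bigI => j jD.
have oj : open j.1 := set_mem (sD'' j jD).
apply: open_nbhs_nbhs; split => //.
have := Fx j jD.
case: j {jD oj} => U [] /=.
  by apply; rewrite inE.
by move=> [z]; rewrite inE => /eqP ->.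
Qed.

Lemma hd_from_vietoris (HP : forall x, P [fset x]%fset) :
  hereditarily_disconnected (vietoris P) -> hereditarily_disconnected X.
Proof.
move=> hd A [a0 Aa0] cA.
set f := (fun x : X => (exist _ [fset x]%fset (HP x) : vietoris P)).
have cfA : connected (f @` A).
  by apply: connected_continuous_connected cA _; apply: continuous_subspaceT;
     exact: sing_cont.
have [B eB] := hd (f @` A) (ex_intro _ (f a0) (ex_intro2 _ _ a0 Aa0 erefl)) cfA.
exists a0; apply/seteqP; split=> a; last by move=> ->.
move=> Aa.
have : f a = f a0.
  have h1 : (f @` A) (f a) by exists a.
  have h2 : (f @` A) (f a0) by exists a0.
  by move: h1 h2; rewrite eB => -> ->.
by move=> /(congr1 val) /= /fset1_inj.
Qed.

End Vsub.

Section Main.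
Variables (X : topologicalType) (P : pred {fset X}).
Hypothesis hdX : hereditarily_disconnected X.
Variable C : set (vietoris P).
Hypothesis cC : connected C.

Let V := vietoris P.
Let Z : set (V * X) := [set z | C z.1 /\ z.2 \in val z.1].
Let clopenZ (W : set (V * X)) :=
  (exists2 O, open O & W = Z `&` O) /\ (exists2 F, closed F & W = Z `&` F).

Lemma projW W : clopenZ W -> W !=set0 -> forall B, C B -> exists x, W (B, x).
Proof.
move=> [ [Op oO WO] [F cF WF] ] [ [B0 x0] W0] B CB.
set S := [set B | exists x, W (B, x)].
suff SC : S = C by have : S B by rewrite SC.
apply: conn_clopen => //.
- by move=> B' [x]; rewrite WO => -[[? ?] _].
- by exists B0; exists x0.
- move=> B' [x Wx]; have := Wx; rewrite WO => -[[CB' xB'] Ox].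
  have : nbhs (B', x) Op by apply: open_nbhs_nbhs.
  case => -[Q R] /= [nQ nR] QRO.
  exists (Q `&` @vminus X P (interior R)).
    apply: filterI => //; apply: open_nbhs_nbhs; split.
      by apply: vminus_open; exact: open_interior.
    by exists x.
  move=> B'' [CB'' [QB'' [y yB'' Ry]]]; exists y; rewrite WO.
  split; first by split.
  by apply: QRO; split => //; exact: interior_subset.
- move=> B' CB' nS.
  have : forall x, exists QR : set V * set X, x \in val B' ->
      [/\ nbhs B' QR.1, nbhs x QR.2 & QR.1 `*` QR.2 `<=` ~` F].
    move=> x; case: (boolP (x \in val B')) => xB; last by exists (setT, setT).
    have : nbhs (B', x) (~` F).
      apply: open_nbhs_nbhs; split; first exact: closed_openC.
      by move=> Fx; apply: nS; exists x; rewrite WF.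
    by case => -[Q R] /= [nQ nR] sub; exists (Q, R).
  case/choice => f hf.
  exists ((\bigcap_(x in [set` val B']) (f x).1) `&`
          @vplus X P (\bigcup_(x in [set` val B']) interior (f x).2)).
    apply: filterI.
      by apply: filter_bigI => x xB; have [] := hf x xB.
    apply: open_nbhs_nbhs; split.
      by apply: vplus_open; apply: bigcup_open => x _; exact: open_interior.
    move=> x xB; exists x => //; by have [] := hf x xB.
  move=> B'' [CB'' [Q'' V'']] [y]; rewrite WF => -[[_ yB''] Fy].
  have [x xB' Iy] := V'' y yB''.
  have [_ _ sub] := hf x xB'.
  by apply: (sub (B'', y)) => //; split; [exact: Q'' | exact: interior_subset].
Qed.


Lemma fiber_sub (B1 B2 : V) (x1 : X) : C B1 -> C B2 -> x1 \in val B1 -> x1 \in val B2.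
Proof.
move=> CB1 CB2 xB1.
suff H : forall n (S : {fset X}) W, #|` S| = n -> clopenZ W -> W (B1, x1) ->
    (forall y, W (B2, y) -> y \in S) -> x1 \in val B2.
  apply: (H _ (val B2) Z erefl) => //.
  - by split; exists setT; rewrite ?setIT //; exact: openT.
  - by move=> y [].
elim/ltn_ind => n IH S W eS cW W1 fib.
have WZ : W `<=` Z by case: cW => -[Op _ ->] _ z [].
have step : forall W1 W2, clopenZ W1 -> clopenZ W2 -> W1 `<=` W -> W2 `<=` W ->
    W2 !=set0 -> (forall z, W1 z -> W2 z -> False) -> W1 (B1, x1) ->
    x1 \in val B2.
  move=> Wa Wb cWa cWb sWa sWb Wb0 dis Wa1.
  have [y Wby] := projW Wb cWb Wb0 B2 CB2.
  have yS : y \in S by apply: fib; exact: sWb.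
  apply: (IH #|` S `\ y|%fset _ (S `\ y)%fset Wa erefl cWa Wa1).
    by rewrite -eS (cardfsD1 y S) yS.
  move=> y' Way'; rewrite in_fsetD1 fib ?andbT; last exact: sWa.
  by apply/eqP => eyy; apply: (dis (B2, y)) => //; rewrite -eyy.
case: (pselect (connected W)) => [cnW | ncW].
  have [y Wy] := projW W cW (ex_intro _ _ W1) B2 CB2.
  have cs : connected (snd @` W).
    apply: connected_continuous_connected cnW _; apply: continuous_subspaceT.
    by move=> [a b]; exact: cvg_snd.
  have [x ex] := hdX _ (ex_intro _ x1 (ex_intro2 _ _ (B1, x1) W1 erefl)) cs.
  have h1 : (snd @` W) x1 by exists (B1, x1).
  have h2 : (snd @` W) y by exists (B2, y).
  move: h1 h2; rewrite ex => /= -> yx.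
  by rewrite -yx; have [] := WZ _ Wy.
have [B' [B'0 [C1 oC1 e1] [C2 cC2 e2] neq]] : exists B' : set (V * X),
    [/\ B' !=set0, exists2 C, open C & B' = W `&` C,
        exists2 C, closed C & B' = W `&` C & B' <> W].
  apply: contrapT => hn; apply: ncW => B' h0 h1 h2.
  by apply: contrapT => hne; apply: hn; exists B'; split.
have sB' : B' `<=` W by rewrite e1 => z [].
have e3 : W `&` ~` C1 = W `&` ~` C2.
  apply/seteqP; split=> z [Wz nC]; split => // Cz; apply: nC.
    by have : (W `&` C2) z by []; rewrite -e2 e1 => -[].
  by have : (W `&` C1) z by []; rewrite -e1 e2 => -[].
have cB' : clopenZ B'.
  case: cW => -[Op oOp eOp] [F cF eF]; split.
    by exists (Op `&` C1); [exact: openI | rewrite e1 eOp setIA].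
  by exists (F `&` C2); [exact: closedI | rewrite e2 eF setIA].
have cW' : clopenZ (W `&` ~` C1).
  case: cW => -[Op oOp eOp] [F cF eF]; split.
    exists (Op `&` ~` C2); first by apply: openI => //; exact: closed_openC.
    by rewrite e3 eOp setIA.
  exists (F `&` ~` C1); first by apply: closedI => //; exact: open_closedC.
  by rewrite eF setIA.
have W'0 : (W `&` ~` C1) !=set0.
  apply: contrapT => /set0P/negP/negPn/eqP h; apply: neq.
  apply/seteqP; split => // z Wz; rewrite e1; split => //.
  by apply: contrapT => nC; have : (W `&` ~` C1) z by []; rewrite h.
have disj : forall z, B' z -> (W `&` ~` C1) z -> False.
  by move=> z; rewrite e1 => -[_ ?] [_ ?].
case: (pselect (B' (B1, x1))) => B'1.
  by apply: (step B' (W `&` ~` C1)) => //.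
apply: (step (W `&` ~` C1) B') => //.
- by move=> z a b; exact: (disj z b a).
- split => // C1x; apply: B'1; rewrite e1; by split.
Qed.

End Main.

Lemma hd_vietoris (X : topologicalType) (P : pred {fset X}) :
  hereditarily_disconnected X -> hereditarily_disconnected (vietoris P).
Proof.
move=> hdX C [B0 CB0] cC; exists B0; apply/seteqP; split => B; last by move=> ->.
move=> CB; apply: val_inj; apply/fsetP => x; apply/idP/idP => h.
  exact: (@fiber_sub X P hdX C cC B B0 x CB CB0 h).
exact: (@fiber_sub X P hdX C cC B0 B x CB0 CB h).
Qed.

Lemma sing_ok (X : topologicalType) (n : nat) (x : X) : (0 < n)%N ->
  (([fset x]%fset != fset0) && (#|` [fset x]%fset| <= n))%N.
Proof. by move=> n0; rewrite cardfs1 n0 andbT; apply/fset0Pn; exists x; rewrite inE. Qed.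

Theorem corollary5p10 (X : topologicalType) : hausdorff_space X ->
  [/\ (hereditarily_disconnected X <->
         exists n : nat, (0 < n)%N /\ hereditarily_disconnected (Fin_n X n)),
      (hereditarily_disconnected X <->
         forall n : nat, (0 < n)%N -> hereditarily_disconnected (Fin_n X n))
    & (hereditarily_disconnected X <-> hereditarily_disconnected (Fin X))].
Proof.
move=> _; split.
- split => [hd | [n [n0 hd]]].
    by exists 1%N; split => //; exact: hd_vietoris.
  exact: (@hd_from_vietoris X (fun A : {fset X} => (A != fset0) && (#|` A| <= n))%N (fun x => @sing_ok X n x n0) hd).
- split => [hd n n0 | hd]; first exact: hd_vietoris.
  exact: (@hd_from_vietoris X (fun A : {fset X} => (A != fset0) && (#|` A| <= 1))%N (fun x => @sing_ok X 1 x erefl) (hd 1%N erefl)).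
- split => [hd | hd]; first exact: hd_vietoris.
  have HP : forall x : X, ([fset x]%fset != fset0) by move=> x; apply/fset0Pn; exists x; rewrite inE.
  exact: (@hd_from_vietoris X (fun A : {fset X} => A != fset0) HP hd).
Qed.
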